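(* Let $2\le k_1<k_2<\dots<k_m\le n$ ($m\ge1$) and integers $1\le i_{k_j}\le k_j-1$ with $\operatorname{maj}:=\sum_{j=1}^m i_{k_j}\le k_1$. Let $\pi_1=t_{k_1}^{i_{k_1}}\cdot t_{k_2}^{i_{k_2}}\cdots t_{k_m}^{i_{k_m}}\in D_n$ and let $q$ be an integer with $k_m\le q\le n-1$. Then $$\pi_1\cdot w_q=\begin{cases} w_q\cdot \pi_1 & \text{if } \operatorname{maj}=k_1,\\ w_{\operatorname{maj}}\cdot w_q\cdot \pi_1 & \text{if } \operatorname{maj}<k_1.\end{cases}$$
   Context: $D_n$ ($n\ge 2$) is the Coxeter group with generators $s_{1'},s_1,\dots,s_{n-1}$ and relations $s^2=1$, $(s_i s_{i+1})^3=1$, $(s_is_j)^2=1$ for $|i-j|\ge 2$, $(s_{1'}s_2)^3=1$, $(s_{1'}s_i)^2=1$ for $i\ne 2$. For $2\le k\le n$, $t_k=s_1s_2\cdots s_{k-1}$; for $1\le k\le n-1$, $w_k=s_k s_{k-1}\cdots s_2 s_1 s_{1'} s_2\cdots s_k$. (The hypothesis $\sum_j i_{k_j}\le k_1$ says that $\pi_1$, viewed in $S_n$, is a ''standard OGS elementary element'', and $\operatorname{maj}$ is its major index.) *)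

(* Defs.v *)
From mathcomp Require Import all_boot all_fingroup.
Set Implicit Arguments. Unset Strict Implicit. Unset Printing Implicit Defensive.
Local Open Scope group_scope.

(* We work with elements
   [s1'] and [s i] (1 <= i <= n-1) of an arbitrary finite group satisfying
   the defining relations of D_n; an identity between words holds in D_n
   iff it holds for every such family (D_n is the universal one, and is finite). *)
Definition Dn_relations (gT : finGroupType) (n : nat) (s1' : gT) (s : nat -> gT) : Prop :=
  s1' ^+ 2 = 1 /\
      (forall i, 1 <= i <= n.-1 -> s i ^+ 2 = 1) /\
      (forall i, 1 <= i -> i.+1 <= n.-1 -> (s i * s i.+1) ^+ 3 = 1) /\
      (forall i j, 1 <= i <= n.-1 -> 1 <= j <= n.-1 -> (i + 2 <= j) || (j + 2 <= i) ->
                    (s i * s j) ^+ 2 = 1) /\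
      (2 <= n.-1 -> (s1' * s 2) ^+ 3 = 1) /\
      (forall i, 1 <= i <= n.-1 -> i != 2 -> (s1' * s i) ^+ 2 = 1).

Definition tD (gT : finGroupType) (s : nat -> gT) (k : nat) : gT :=
  \prod_(1 <= i < k) s i.

(* w_k = s_k s_{k-1} ... s_1 s_{1'} s_2 ... s_k *)
Definition wD (gT : finGroupType) (s1' : gT) (s : nat -> gT) (k : nat) : gT :=
  (\prod_(0 <= j < k) s (k - j)) * s1' * \prod_(2 <= i < k.+1) s i.

(* pi_1 = t_{k_0}^{e_0} t_{k_1}^{e_1} ... t_{k_{m-1}}^{e_{m-1}} *)
Definition pi1D (gT : finGroupType) (s : nat -> gT) (m : nat) (k e : nat -> nat) : gT :=
  \prod_(0 <= j < m) tD s (k j) ^+ e j.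

(* Main.v *)
Require Import Defs.
From mathcomp Require Import all_boot all_fingroup.
From mathcomp Require Import zify.
Set Implicit Arguments. Unset Strict Implicit. Unset Printing Implicit Defensive.

Definition cyc k p := if (p < k.-1)%N then p.+1 else if p == k.-1 then 0%N else p.
Definition sw i p := if p == i.-1 then i else if p == i then i.-1 else p.
Lemma cyc_sw k p : (1 <= k)%N -> cyc k (sw k p) = cyc k.+1 p.
Proof. move=> h; rewrite /cyc /sw; repeat case: ifPn => //=; lia. Qed.
Lemma cyc1 p : cyc 1 p = p.
Proof. rewrite /cyc; repeat case: ifPn => //=; lia. Qed.
Lemma cyc_lt k p q : (p < q)%N -> (k <= q)%N -> (cyc k p < q)%N.
Proof. rewrite /cyc; repeat case: ifPn => //=; lia. Qed.
Lemma sw_lt i p q : (p < q)%N -> (i < q)%N -> (sw i p < q)%N.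
Proof. rewrite /sw; repeat case: ifPn => //=; lia. Qed.
Lemma iter_cyc k e p : (p < k)%N -> (p + e <= k)%N ->
  iter e (cyc k) p = if p + e == k then 0%N else (p + e)%N.
Proof.
elim: e => [|e IH] h1 h2; first by rewrite addn0; case: ifPn => //; lia.
rewrite iterS IH //; last lia.
rewrite /cyc; repeat case: ifPn => //=; lia.
Qed.

Section Gen.
Variable gT : finGroupType.
Local Open Scope group_scope.
Implicit Types a b c x y W : gT.

Lemma inv_sq x : x * x = 1 -> x^-1 = x.
Proof. by move=> h; apply/eqP; rewrite eq_invg_mul h. Qed.

Lemma comm_of x y : x * x = 1 -> y * y = 1 -> (x * y) ^+ 2 = 1 -> x * y = y * x.
Proof.
move=> hx hy h; rewrite expgS expg1 in h.
have h' : (x * y)^-1 = x * y by apply: inv_sq.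
by rewrite -h' invMg (inv_sq hx) (inv_sq hy).
Qed.

Lemma braid_of x y : x * x = 1 -> y * y = 1 -> (x * y) ^+ 3 = 1 -> x * y * x = y * x * y.
Proof.
move=> hx hy h; rewrite expgS expgS expg1 !mulgA in h.
have /eqP h' : (x * y * x)^-1 == y * x * y by rewrite eq_invg_mul !mulgA h.
by rewrite -h' !invMg (inv_sq hx) (inv_sq hy) mulgA.
Qed.

Lemma pre2 a x y x' y' : x * y = x' * y' -> a * x * y = a * x' * y'.
Proof. by move=> h; rewrite -!mulgA h. Qed.
Lemma pre3 a x y z x' y' z' : x * y * z = x' * y' * z' -> a * x * y * z = a * x' * y' * z'.
Proof. by move=> h; rewrite -[a * x * y]mulgA -[a * (x * y) * z]mulgA h !mulgA. Qed.

Lemma braidconj b c W : b * b = 1 -> c * c = 1 -> b * c * b = c * b * c -> commute c W ->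
  commute b (c * (b * W * b) * c).
Proof.
move=> hb hc hbr hW; rewrite /commute !mulgA hbr.
rewrite -(mulgA (c * b) c W) hW mulgA.
have -> : c * b * W * c * b * c = c * b * W * (c * b * c) by rewrite !mulgA.
by rewrite -hbr !mulgA.
Qed.
End Gen.

Section Dn.
Variable gT : finGroupType.
Variables (n : nat) (s1' : gT) (s : nat -> gT).
Hypothesis R : Dn_relations n s1' s.
Local Open Scope group_scope.

Lemma s1'2 : s1' * s1' = 1.
Proof. by case: R; rewrite expgS expg1. Qed.
Lemma ss i : (1 <= i <= n.-1)%N -> s i * s i = 1.
Proof. by case: R => _ [h _] hi; rewrite -(h i hi) expgS expg1. Qed.
Lemma scomm i j : (1 <= i <= n.-1)%N -> (1 <= j <= n.-1)%N -> ((i + 2 <= j)%N || (j + 2 <= i)%N) ->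
  commute (s i) (s j).
Proof.
case: R => _ [_ [_ [h _]]] hi hj hij; apply: comm_of; try exact: ss.
exact: h.
Qed.
Lemma sbraid i : (1 <= i)%N -> (i.+1 <= n.-1)%N -> s i * s i.+1 * s i = s i.+1 * s i * s i.+1.
Proof.
case: R => _ [_ [h _]] h1 h2; apply: braid_of; try apply: ss; try lia.
exact: h.
Qed.
Lemma s'comm i : (1 <= i <= n.-1)%N -> i != 2%N -> commute s1' (s i).
Proof.
case: R => _ [_ [_ [_ [_ h]]]] h1 h2; apply: comm_of; [exact: s1'2|exact: ss|exact: h].
Qed.
Lemma s'braid : (2 <= n.-1)%N -> s1' * s 2 * s1' = s 2 * s1' * s 2.
Proof.
case: R => _ [_ [_ [_ [h _]]]] h1; apply: braid_of; [exact: s1'2|apply: ss; lia|exact: h].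
Qed.

Notation w := (wD s1' s).

Lemma w1 : w 1 = s 1 * s1'.
Proof. by rewrite /wD big_nat1 big_geq // mulg1. Qed.
Lemma wS k : (1 <= k)%N -> w k.+1 = s k.+1 * w k * s k.+1.
Proof.
move=> hk; rewrite /wD big_nat_recl // big_nat_recr //= subn0.
under eq_bigr => j _ do rewrite subSS.
by rewrite !mulgA.
Qed.

Lemma wcommB k i : (1 <= k)%N -> (k + 2 <= i)%N -> (i <= n.-1)%N -> commute (s i) (w k).
Proof.
elim: k i => [//|k IH] i _ h1 h2.
case: k IH h1 => [|k] IH h1.
  rewrite w1; apply: commuteM; first by apply: scomm; lia.
  apply: commute_sym; apply: s'comm; lia.
rewrite wS //; apply: commuteM; first apply: commuteM.
- by apply: scomm; lia.
- by apply: IH; lia.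
- by apply: scomm; lia.
Qed.

Lemma wcommA k i : (2 <= i)%N -> (i.+1 <= k)%N -> (k <= n.-1)%N -> commute (s i) (w k).
Proof.
elim: k i => [//|k IH] i h1 h2 h3.
rewrite wS; last lia.
case: (ltnP i k) => hik.
  apply: commuteM; first apply: commuteM.
  - by apply: scomm; lia.
  - by apply: IH; lia.
  - by apply: scomm; lia.
have -> : i = k by lia.
case: k IH h1 h2 h3 hik => [|j] IH h1 h2 h3 hik; first lia.
rewrite wS; last lia.
apply: braidconj; [apply: ss; lia|apply: ss; lia|apply: sbraid; lia|].
apply: wcommB; lia.
Qed.

Lemma wC k : (2 <= k)%N -> (k <= n.-1)%N -> s 1 * w k * s 1 = w 1 * w k.
Proof.
elim: k => [//|k IH] h1 h2.
case: (ltnP k 2) => hk.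
  have -> : k = 1%N by lia.
  rewrite wS // w1 !mulgA.
  have e1 : commute s1' (s 1) by apply: s'comm; lia.
  rewrite (pre2 _ (esym e1)) (pre3 _ (sbraid _ _)); try lia.
  rewrite (pre3 _ (esym (s'braid _))); last lia.
  by rewrite (pre2 _ e1).
rewrite wS; last lia.
have e : commute (s 1) (s k.+1) by apply: scomm; lia.
have e2 : commute (s k.+1) (w 1) by apply: wcommB; lia.
have {}IH := IH hk (ltnW h2).
move: (w k) (w 1) IH e2 => X Y IH e2.
rewrite !mulgA e (pre2 _ (esym e)).
have -> : s k.+1 * s 1 * X * s 1 * s k.+1 = s k.+1 * (s 1 * X * s 1) * s k.+1 by rewrite !mulgA.
by rewrite IH !mulgA e2.
Qed.

Variable q : nat.
Hypothesis hq2 : (2 <= q)%N.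
Hypothesis hqn : (q <= n.-1)%N.

Fixpoint M (p : nat) : gT := if p is p'.+1 then s p * M p' * s p else w q.

Lemma MD p : (1 <= p)%N -> (p < q)%N -> M p = w p * w q.
Proof.
elim: p => [//|p IH] h1 h2.
case: p IH h1 h2 => [|p] IH h1 h2; first by rewrite /= wC.
rewrite [M _]/= -/(M p.+1) IH //; last lia.
have e : commute (s p.+2) (w q) by apply: wcommA; lia.
rewrite [w p.+2]wS //.
move: (w q) (w p.+1) e => X Y e.
by rewrite !mulgA -[LHS]mulgA -e mulgA.
Qed.

Lemma ME p : (p < q)%N -> forall i, (1 <= i)%N -> (i < q)%N -> i != p -> i != p.+1 ->
  commute (s i) (M p).
Proof.
elim/ltn_ind: p => p IH hp i h1 h2 h3 h4.
case: p IH hp h3 h4 => [|p] IH hp h3 h4.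
  by apply: wcommA; lia.
have [eip|hip] := eqVneq i p.
  subst i.
  case: p IH hp h3 h4 h1 h2 => [|r] IH hp h3 h4 h1 h2; first lia.
  rewrite /=.
  apply: braidconj; [apply: ss; lia|apply: ss; lia|apply: sbraid; lia|].
  by apply: IH; lia.
rewrite /=; apply: commuteM; first apply: commuteM.
- by apply: scomm; lia.
- by apply: IH; lia.
- by apply: scomm; lia.
Qed.

Lemma Msw i p : (1 <= i)%N -> (i < q)%N -> (p < q)%N -> s i * M p = M (sw i p) * s i.
Proof.
case: i => [//|j] h1 h2 hp; rewrite /sw /=.
case: eqVneq => [->|h3].
  by rewrite /= -[RHS]mulgA ss ?mulg1 //; lia.
case: eqVneq => [->|h4].
  by rewrite /= !mulgA ss ?mul1g //; lia.
by apply: ME; rewrite // eq_sym.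
Qed.

Lemma tM k p : (1 <= k)%N -> (k <= q)%N -> (p < q)%N -> tD s k * M p = M (cyc k p) * tD s k.
Proof.
elim: k p => [//|k IH] p h1 h2 hp.
case: k IH h1 h2 => [|k] IH h1 h2.
  by rewrite /tD big_geq // mul1g mulg1 cyc1.
have -> : tD s k.+2 = tD s k.+1 * s k.+1 by rewrite /tD big_nat_recr.
rewrite -mulgA Msw; try lia.
rewrite mulgA IH; try lia; last by apply: sw_lt; lia.
by rewrite cyc_sw // mulgA.
Qed.

Lemma tX k e p : (1 <= k)%N -> (k <= q)%N -> (p < q)%N ->
  tD s k ^+ e * M p = M (iter e (cyc k) p) * tD s k ^+ e.
Proof.
move=> h1 h2; elim: e p => [|e IH] p hp; first by rewrite expg0 mul1g mulg1.
rewrite expgSr -mulgA tM // mulgA IH; last by apply: cyc_lt.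
by rewrite -iterSr -mulgA.
Qed.

Lemma pref (k e : nat -> nat) m p : (1 <= m)%N ->
  (forall j, (j < m)%N -> (k 0 <= k j)%N && (k j <= q)%N) ->
  (forall j, (0 < j < m)%N -> (k 0 < k j)%N) ->
  (forall j, (j < m)%N -> (1 <= e j)%N) ->
  (p + \sum_(0 <= j < m) e j <= k 0)%N ->
  pi1D s m k e * M p =
  M (if (p + \sum_(0 <= j < m) e j == k 0)%N then 0%N else (p + \sum_(0 <= j < m) e j)%N)
    * pi1D s m k e.
Proof.
elim: m p => [//|m IH] p _ Hk Hkj He hS.
have hk0 := Hk 0%N isT.
case: m IH Hk Hkj He hS => [|m] IH Hk Hkj He hS.
  move: hS; rewrite /pi1D !big_nat1 => hS.
  have he := He 0%N isT.
  rewrite tX //; try lia.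
  by rewrite iter_cyc //; lia.
have hS1 : (e 0 <= \sum_(0 <= j < m.+1) e j)%N by rewrite big_ltn // leq_addr.
have he := He 0%N isT.
have hem := He m.+1 (ltnSn _).
have hkm := Hk m.+1 (ltnSn _).
have hkjm := Hkj m.+1 (ltnSn _).
rewrite big_nat_recr //= in hS.
have -> : pi1D s m.+2 k e = pi1D s m.+1 k e * tD s (k m.+1) ^+ e m.+1 by rewrite /pi1D big_nat_recr.
rewrite -mulgA tX; try lia.
rewrite iter_cyc; try lia.
have -> : (p + e m.+1 == k m.+1) = false by apply/negbTE; lia.
have -> : (\sum_(0 <= j < m.+2) e j = \sum_(0 <= j < m.+1) e j + e m.+1)%N by rewrite big_nat_recr.
rewrite mulgA IH //; first last.
- lia.
- by move=> j hj; apply: He; lia.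
- by move=> j hj; apply: Hkj; lia.
- by move=> j hj; apply: Hk; lia.
rewrite -mulgA.
by have -> : (p + e m.+1 + \sum_(0 <= i < m.+1) e i = p + (\sum_(0 <= i < m.+1) e i + e m.+1))%N by lia.
Qed.
End Dn.

Lemma incr (k : nat -> nat) m : (forall j, j.+1 < m -> k j < k j.+1) ->
  forall j d, j + d < m -> k j + d <= k (j + d).
Proof.
move=> h j; elim=> [|d IH] hd; first by rewrite !addn0.
have := IH ltac:(lia); have := h (j + d) ltac:(lia).
rewrite !addnS; lia.
Qed.

Theorem mainTheorem7 (gT : finGroupType) (n : nat) (s1' : gT) (s : nat -> gT)
    (m : nat) (k e : nat -> nat) (q : nat) :
  2 <= n ->
  Dn_relations n s1' s ->
  0 < m ->
  2 <= k 0 ->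
  (forall j, j.+1 < m -> k j < k j.+1) ->
  k m.-1 <= n ->
  (forall j, j < m -> 1 <= e j <= (k j).-1) ->
  (\sum_(0 <= j < m) e j <= k 0)%N ->
  k m.-1 <= q <= n.-1 ->
  (pi1D s m k e * wD s1' s q)%g =
    (if (\sum_(0 <= j < m) e j == k 0)%N
     then wD s1' s q * pi1D s m k e
     else wD s1' s (\sum_(0 <= j < m) e j) * wD s1' s q * pi1D s m k e)%g.
Proof.
move=> hn R hm hk0 hk hkn he hS /andP [hq1 hq2].
have I := incr hk.
have hkq : forall j, j < m -> k 0 <= k j <= q.
  move=> j hj; have := I 0 j ltac:(lia); have := I j (m.-1 - j) ltac:(lia).
  have -> : j + (m.-1 - j) = m.-1 by lia.
  rewrite add0n; lia.
have hkj : forall j, 0 < j < m -> k 0 < k j.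
  move=> j hj; have := I 0 j ltac:(lia); rewrite add0n; lia.
have he1 : forall j, j < m -> 1 <= e j by move=> j /he /andP [].
have hk0q := hkq 0 hm.
have hq : 2 <= q by lia.
have hS1 : e 0 <= \sum_(0 <= j < m) e j by rewrite big_ltn // leq_addr.
have he0 := he1 0 hm.
have := pref R hq hq2 hm hkq hkj he1 (p := 0) ltac:(lia).
rewrite add0n /= => ->.
case: eqP => [//|hne].
rewrite (MD R hq hq2) //; lia.
Qed.
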